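(* Let $\mathbf H\in\mathbb R^{n\times n}$ be symmetric positive semidefinite with eigenvalues $\lambda_1(\mathbf H)\ge\dots\ge\lambda_n(\mathbf H)\ge0$, let $\Phi(\mathbf M)=\mathbf M-\frac{\mathbf M^2}{\mathrm{tr}(\mathbf M)}$, and let $q\in[n]$ be arbitrary. Then for every $r\in\mathbb N$, $\lambda_1(\Phi^r(\mathbf H))\le\eta(r)$, where $\eta$ is the decreasing solution of the ordinary differential equation $$\frac{d\eta(t)}{dt}=-\frac{\eta(t)^2}{q\,\eta(t)+\sum_{l=q+1}^n\lambda_l(\mathbf H)},\qquad\eta(0)=\lambda_1(\mathbf H).$$
   Context: $\Phi^r$ denotes the $r$-fold composition of $\Phi$, and $\lambda_1$ the largest eigenvalue. *)

(* Defs.v *)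
From HB Require Import structures.
From mathcomp Require Import all_boot all_order all_algebra.
From mathcomp Require Import all_classical all_reals all_analysis.
Set Implicit Arguments. Unset Strict Implicit. Unset Printing Implicit Defensive.
Import Order.TTheory GRing.Theory Num.Theory.
Local Open Scope ring_scope.

Definition Phi (R : fieldType) (n : nat) (M : 'M[R]_n) : 'M[R]_n :=
  M - (\tr M)^-1 *: (M *m M).

(* Main.v *)
From HB Require Import structures.
From mathcomp Require Import all_boot all_order all_algebra.
From mathcomp Require Import all_classical all_reals all_analysis.
From mathcomp Require Import ring lra.
Import Order.TTheory GRing.Theory Num.Theory.
Import numFieldNormedType.Exports.
Local Open Scope classical_set_scope.
Local Open Scope ring_scope.
Require Import Defs.
Section ODE.
Variables (R : realType) (q : nat) (S : R) (eta : R -> R).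
Hypothesis q1 : (1 <= q)%N.
Hypothesis S0 : 0 <= S.
Hypothesis eta0 : 0 <= eta 0.
Hypothesis etac : {within `[0%R, +oo[, continuous eta}.
Hypothesis etad : forall t : R, 0 < t ->
  is_derive t 1 eta (- (eta t ^+ 2) / (q%:R * eta t + S)).
Hypothesis etam : forall s t : R, 0 <= s -> s <= t -> eta t <= eta s.

Let df t := - (eta t ^+ 2) / (q%:R * eta t + S).

Lemma contab a b : 0 <= a -> {within `[a, b], continuous eta}.
Proof.
move=> a0; apply: continuous_subspaceW etac => x /=.
rewrite !in_itv /= andbT => /andP[ax _]; exact: le_trans ax.
Qed.

Lemma mvt a b : 0 <= a -> a < b ->
  exists2 c, a < c < b & eta b - eta a = df c * (b - a).
Proof.
move=> a0 ab.
have h : forall x, x \in `]a, b[ -> is_derive x 1 eta (df x).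
  move=> x; rewrite in_itv /= => /andP[ax _]; apply: etad; exact: le_lt_trans ax.
have [c] := MVT ab h (contab a b a0).
by rewrite in_itv /= => cab ec; exists c.
Qed.

Lemma ivt a b v : 0 <= a -> a <= b -> eta b <= v <= eta a ->
  exists2 c, a <= c <= b & eta c = v.
Proof.
move=> a0 ab /andP[h1 h2].
have hv : Num.min (eta a) (eta b) <= v <= Num.max (eta a) (eta b).
  by rewrite ge_min le_max h1 h2 orbT.
have [c] := @IVT R eta a b v ab (contab a b a0) hv.
by rewrite in_itv /= => cab ec; exists c.
Qed.


Lemma qR1 : 1 <= q%:R :> R.
Proof. by rewrite ler1n. Qed.

Lemma eta_ge0_half k t : 0 <= t -> t <= k%:R / 2 -> 0 <= eta t.
Proof.
elim: k t => [|k IH] t t0 tk.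
  have -> : t = 0.
    by move: tk; rewrite mul0r => tk; apply/eqP; rewrite eq_le tk t0.
  done.
have [tk'|kt] := leP t (k%:R / 2); first exact: IH.
set a := k%:R / 2 in kt.
have a0 : 0 <= a by rewrite /a divr_ge0 // ler0n.
have etaa : 0 <= eta a by apply: IH => //.
rewrite leNgt; apply/negP => ct.
have at_ : a <= t by exact: ltW.
have hv : eta t <= 0 <= eta a by rewrite (ltW ct) etaa.
have [a' /andP[aa' a't] ea'] := ivt a t 0 a0 at_ hv.
have [eps [e0 [ec eS]]] : exists eps, 0 < eps /\ eps <= - eta t /\
    (S = 0 \/ 2 * q%:R * eps <= S).
  have [->|Sn0] := eqVneq S 0.
    by exists (- eta t); split; [rewrite oppr_gt0 | split; [|left]].
  have qp : 0 < q%:R :> R by rewrite ltr0n.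
  have Sp : 0 < S by rewrite lt_neqAle eq_sym Sn0 S0.
  exists (Num.min (- eta t) (S / (2 * q%:R))); split.
    by rewrite lt_min oppr_gt0 ct /= divr_gt0 // mulr_gt0.
  split; first by rewrite ge_min lexx.
  right; have e : 2 * q%:R * (S / (2 * q%:R)) = S.
    by field; rewrite lt0r_neq0.
  rewrite -[X in _ <= X]e.
  by rewrite ler_wpM2l ?mulr_ge0 ?ler0n // ge_min lexx orbT.
have a'0 : 0 <= a' by exact: le_trans aa'.
have hv2 : eta t <= - eps <= eta a' by rewrite ea' oppr_le0 (ltW e0) andbT lerNr.
have [b /andP[a'b bt] eb] := ivt a' t (- eps) a'0 a't hv2.
have a'b' : a' < b.
  rewrite lt_neqAle a'b andbT; apply/negP => /eqP ab'.
  by move: eb; rewrite -ab' ea' => /eqP; rewrite eq_sym oppr_eq0 gt_eqF.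
have [xi /andP[a'xi xib] ed] := mvt a' b a'0 a'b'.
set y := eta xi in ed.
have yl : - eps <= y by rewrite -eb /y etam // ?ltW // (le_lt_trans a'0 a'xi).
have yu : y <= 0 by rewrite -ea' /y etam // ltW.
have claim : y ^+ 2 / (q%:R * y + S) <= eps.
  have q1' := qR1.
  case: (leP (q%:R * y + S) 0) => hd.
    apply: le_trans (ltW e0); apply: mulr_ge0_le0; first exact: sqr_ge0.
    by rewrite invr_le0.
  case: eS => [S0'|eS].
    move: hd; rewrite S0' addr0 => hd.
    have : q%:R * y <= 0 by rewrite mulr_ge0_le0 // ler0n.
    by rewrite leNgt hd.
  rewrite ler_pdivrMr //.
  have h1 : 0 <= q%:R * (y + eps) by rewrite mulr_ge0 ?ler0n // -lerBlDr sub0r.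
  have h2 : 0 <= (q%:R - 1) * eps by rewrite mulr_ge0 ?subr_ge0 // ltW.
  have h3 : 0 <= (- y) * (y + eps) by rewrite mulr_ge0 // ?oppr_ge0 // -lerBlDr sub0r.
  nra.
move: ed; rewrite /df -/y eb ea' subr0 => ed.
have : eps <= eps / 2.
  have E : eps = y ^+ 2 / (q%:R * y + S) * (b - a').
    by rewrite -[eps]opprK ed !mulNr opprK.
  rewrite {1}E.
  apply: (@le_trans _ _ (eps * (b - a'))).
    by rewrite ler_wpM2r // subr_ge0.
  rewrite -natr1 in tk.
  have : b - a' <= 1 / 2 by rewrite /a in aa'; lra.
  move=> h; apply: (@le_trans _ _ (eps * (1/2))); first by apply: ler_wpM2l => //; exact: ltW.
  lra.
lra.
Qed.

Definition gf (x : R) := x - x ^+ 2 / (q%:R * x + S).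

Lemma h_mono x y : 0 <= y -> y <= x ->
  y ^+ 2 / (q%:R * y + S) <= x ^+ 2 / (q%:R * x + S).
Proof.
move=> y0 yx; have q1' := qR1.
have [->|yp] := eqVneq y 0.
  by rewrite expr0n /= mul0r divr_ge0 ?sqr_ge0 // addr_ge0 // mulr_ge0 // (le_trans y0 yx).
have ypos : 0 < y by rewrite lt_neqAle eq_sym yp y0.
have xpos : 0 < x by exact: lt_le_trans yx.
have dy : 0 < q%:R * y + S by rewrite ltr_pwDl // mulr_gt0 // (lt_le_trans ltr01).
have dx : 0 < q%:R * x + S by rewrite ltr_pwDl // mulr_gt0 // (lt_le_trans ltr01).
rewrite ler_pdivrMr // mulrAC ler_pdivlMr //.
have h1 : 0 <= q%:R * x * y * (x - y) by rewrite !mulr_ge0 ?subr_ge0 // ?ltW // ler0n.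
have h2 : 0 <= S * ((x - y) * (x + y)) by rewrite !mulr_ge0 ?subr_ge0 // addr_ge0 // ltW.
nra.
Qed.

Lemma gf_ge0 x : 0 <= x -> 0 <= gf x.
Proof.
move=> x0; have q1' := qR1; rewrite /gf subr_ge0.
have [->|xp] := eqVneq x 0; first by rewrite expr0n /= mul0r.
have xpos : 0 < x by rewrite lt_neqAle eq_sym xp x0.
have dx : 0 < q%:R * x + S by rewrite ltr_pwDl // mulr_gt0 // (lt_le_trans ltr01).
rewrite ler_pdivrMr //.
have h1 : 0 <= x * ((q%:R - 1) * x) by rewrite !mulr_ge0 ?subr_ge0 // ltW.
have h2 : 0 <= x * S by rewrite mulr_ge0 // ltW.
nra.
Qed.

Lemma gf_mono a b : 0 <= a -> a <= b -> gf a <= gf b.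
Proof.
move=> a0 ab; have q1' := qR1.
have b0 : 0 <= b by exact: le_trans ab.
have [->|ap] := eqVneq a 0.
  by rewrite /gf expr0n /= mul0r subr0; exact: gf_ge0.
have apos : 0 < a by rewrite lt_neqAle eq_sym ap a0.
have bpos : 0 < b by exact: lt_le_trans ab.
have da : 0 < q%:R * a + S by rewrite ltr_pwDl // mulr_gt0 // (lt_le_trans ltr01).
have db : 0 < q%:R * b + S by rewrite ltr_pwDl // mulr_gt0 // (lt_le_trans ltr01).
rewrite /gf.
have -> : a - a ^+ 2 / (q%:R * a + S) = (a * (q%:R * a + S) - a ^+ 2) / (q%:R * a + S).
  by field; rewrite gt_eqF.
have -> : b - b ^+ 2 / (q%:R * b + S) = (b * (q%:R * b + S) - b ^+ 2) / (q%:R * b + S).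
  by field; rewrite gt_eqF.
rewrite ler_pdivrMr // mulrAC ler_pdivlMr //.
have qq : 0 <= q%:R * q%:R - q%:R :> R by nra.
have h1 : 0 <= (b - a) * ((q%:R * q%:R - q%:R) * a * b) by repeat apply: mulr_ge0; lra.
have h2 : 0 <= (b - a) * ((q%:R - 1) * S * (a + b)).
  apply: mulr_ge0; first lra. apply: mulr_ge0; last lra. apply: mulr_ge0; [lra|exact: S0].
have h3 : 0 <= (b - a) * (S * S) by apply: mulr_ge0; [rewrite subr_ge0 | apply: mulr_ge0].
nra.
Qed.

Lemma eta_nat_ge0 r : 0 <= eta r%:R.
Proof.
apply: (@eta_ge0_half (r * 2)%N); first by rewrite ler0n.
by rewrite natrM mulfK // pnatr_eq0.
Qed.

Lemma eta_step r : gf (eta r%:R) <= eta r.+1%:R.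
Proof.
have q1' := qR1.
set k := r%:R; set x := eta k.
have k0 : 0 <= k by rewrite ler0n.
have x0 : 0 <= x by exact: eta_nat_ge0.
have [x0'|xp] := eqVneq x 0.
  by rewrite /gf x0' expr0n /= mul0r subr0; exact: eta_nat_ge0.
have xpos : 0 < x by rewrite lt_neqAle eq_sym xp x0.
have dx : 0 < q%:R * x + S by rewrite ltr_pwDl // mulr_gt0 // (lt_le_trans ltr01).
set hx := x ^+ 2 / (q%:R * x + S).
have hxp : 0 < hx by rewrite divr_gt0 // exprn_gt0.
have ek : r.+1%:R = k + 1 by rewrite /k -natr1.
rewrite leNgt; apply/negP => lt.
set c := gf x in lt.
have c0 : 0 <= c by exact: gf_ge0.
have cx : c < x by rewrite /c /gf -/hx ltrBlDr ltrDl.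
have kk1 : k <= k + 1 by rewrite lerDl.
have hv : eta (k + 1) <= c <= eta k by rewrite -ek (ltW lt) ltW.
have [s /andP[ks sk1] es] := ivt k (k + 1) c k0 kk1 hv.
have ks' : k < s.
  rewrite lt_neqAle ks andbT; apply/negP => /eqP ksE.
  by move: es; rewrite -ksE -/x => ec; move: cx; rewrite ec ltxx.
have sk1' : s < k + 1.
  rewrite lt_neqAle sk1 andbT; apply/negP => /eqP skE.
  by move: es lt; rewrite skE -ek => ->; rewrite ltxx.
have [xi /andP[kxi xis] ed] := mvt k s k0 ks'.
set y := eta xi in ed.
have yx : y <= x by rewrite /y /x etam // ltW.
have yc : c <= y by rewrite -es /y etam // ?ltW // (le_lt_trans k0 kxi).
have hy := h_mono x y (le_trans c0 yc) yx.
move: ed; rewrite /df -/y es -/x => ed.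
have E : hx = y ^+ 2 / (q%:R * y + S) * (s - k).
  have -> : hx = - (c - x) by rewrite /c /gf -/hx; ring.
  by rewrite ed !mulNr opprK.
have : hx < hx.
  rewrite {1}E; apply: (@le_lt_trans _ _ (hx * (s - k))).
    by rewrite ler_wpM2r // subr_ge0 ltW.
  rewrite -[X in _ < X]mulr1 ltr_pM2l //; lra.
by rewrite ltxx.
Qed.
End ODE.

Section Scalar.
Variables (R : realType) (n q : nat) (lam : nat -> R) (eta : R -> R).
Hypothesis lam0 : forall l, (1 <= l)%N -> (l <= n)%N -> 0 <= lam l.
Hypothesis lammono : forall l m : nat, (1 <= l)%N -> (l <= m)%N -> (m <= n)%N -> lam m <= lam l.
Hypothesis q1 : (1 <= q)%N.
Hypothesis qn : (q <= n)%N.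
Hypothesis eta0 : eta 0 = lam 1%N.
Hypothesis etac : {within `[0%R, +oo[, continuous eta}.
Let S := \sum_(q.+1 <= l < n.+1) lam l.
Hypothesis etad : forall t : R, 0 < t ->
  is_derive t 1 eta (- (eta t ^+ 2) / (q%:R * eta t + S)).
Hypothesis etam : forall s t : R, 0 <= s -> s <= t -> eta t <= eta s.

Fixpoint phi (r : nat) (x : R) : R :=
  if r is r'.+1 then
    phi r' x - (\sum_(1 <= l < n.+1) phi r' (lam l))^-1 * phi r' x ^+ 2
  else x.

Lemma sum_ge0_range (F : nat -> R) a b :
  (forall l, (a <= l)%N -> (l < b)%N -> 0 <= F l) -> 0 <= \sum_(a <= l < b) F l.
Proof.
move=> h; rewrite big_seq_cond; apply: sumr_ge0 => i /andP[hi _].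
by move: hi; rewrite mem_index_iota => /andP[]; exact: h.
Qed.

Lemma sum_ge_term (F : nat -> R) l :
  (forall j, (1 <= j)%N -> (j <= n)%N -> 0 <= F j) ->
  (1 <= l)%N -> (l <= n)%N -> F l <= \sum_(1 <= j < n.+1) F j.
Proof.
move=> h l1 ln.
rewrite (bigD1_seq l) /= ?mem_index_iota ?l1 ?ltnS ?iota_uniq //.
rewrite lerDl big_seq_cond; apply: sumr_ge0 => i /andP[hi _].
by move: hi; rewrite mem_index_iota ltnS => /andP[]; exact: h.
Qed.

Lemma sum_ge_two (F : nat -> R) l j :
  (forall j, (1 <= j)%N -> (j <= n)%N -> 0 <= F j) ->
  (1 <= l)%N -> (l <= n)%N -> (1 <= j)%N -> (j <= n)%N -> l != j ->
  F l + F j <= \sum_(1 <= i < n.+1) F i.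
Proof.
move=> h l1 ln j1 jn lj.
rewrite (bigD1_seq l) /= ?mem_index_iota ?l1 ?ltnS ?iota_uniq //.
rewrite lerD2l -big_filter (bigD1_seq j) /=; last 2 first.
- by rewrite mem_filter eq_sym lj mem_index_iota j1 ltnS.
- by rewrite filter_uniq // iota_uniq.
rewrite lerDl big_seq_cond; apply: sumr_ge0 => i /andP[hi _].
move: hi; rewrite mem_filter mem_index_iota ltnS => /andP[_ /andP[]]; exact: h.
Qed.

Lemma argmax_range (F : nat -> R) m :
  exists j, [/\ (1 <= j)%N, (j <= m.+1)%N &
    forall l, (1 <= l)%N -> (l <= m.+1)%N -> F l <= F j].
Proof.
elim: m => [|m [j [j1 jm hj]]].
  exists 1%N; split => // l l1 l2.
  by have -> : l = 1%N by apply/eqP; rewrite eqn_leq l1 l2.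
have [le|lt] := leP (F m.+2) (F j).
  exists j; split => //; first by rewrite (leq_trans jm).
  move=> l l1; rewrite leq_eqVlt => /orP[/eqP ->//|]; rewrite ltnS; exact: hj.
exists m.+2; split => // l l1; rewrite leq_eqVlt => /orP[/eqP ->//|].
rewrite ltnS => lm; apply: le_trans (hj l l1 lm) (ltW lt).
Qed.

Let T r := \sum_(1 <= l < n.+1) phi r (lam l).

Lemma phi_inv r : forall l, (1 <= l)%N -> (l <= n)%N ->
  0 <= phi r (lam l) <= lam l.
Proof.
elim: r => [|r IH] l l1 ln /=; first by rewrite lam0 // lexx.
have [h0 h1] := andP (IH l l1 ln).
have hT : phi r (lam l) <= T r.
  apply: (@sum_ge_term (fun j => phi r (lam j))) => // j j1 jn.
  by have /andP[] := IH j j1 jn.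
rewrite -/(T r).
have [T0|Tp] := eqVneq (T r) 0.
  by rewrite T0 invr0 mul0r subr0 h0 h1.
have Tpos : 0 < T r by rewrite lt_neqAle eq_sym Tp (le_trans h0 hT).
apply/andP; split.
  by rewrite subr_ge0 mulrC ler_pdivrMr // expr2; apply: ler_wpM2l.
rewrite lerBlDr; apply: le_trans h1 _; rewrite lerDl.
by apply: mulr_ge0; [rewrite invr_ge0 ltW | exact: sqr_ge0].
Qed.


Lemma S0 : 0 <= S.
Proof.
apply: sum_ge0_range => l l1 ln; apply: lam0; first exact: leq_trans l1.
by rewrite -ltnS.
Qed.

Lemma n0 : (0 < n)%N.
Proof. exact: leq_trans qn. Qed.

Lemma eta00 : 0 <= eta 0.
Proof. by rewrite eta0 lam0 // n0. Qed.

Lemma phi_le r : forall l, (1 <= l)%N -> (l <= n)%N -> phi r (lam l) <= eta r%:R.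
Proof.
have S0' := S0; have eta00' := eta00.
elim: r => [|r IH] l l1 ln.
  by rewrite /= eta0; apply: lammono.
have := argmax_range (fun l => phi r (lam l)) n.-1; rewrite prednK ?n0 //.
move=> [j [j1 jn hj]].
set a := phi r (lam j) in hj.
have [a0 _] := andP (phi_inv r j j1 jn).
have aeta : a <= eta r%:R by exact: IH.
have Fge0 : forall j, (1 <= j)%N -> (j <= n)%N -> 0 <= phi r (lam j).
  by move=> i i1 i2; have /andP[] := phi_inv r i i1 i2.
rewrite /=; rewrite -/(T r).
set mu := phi r (lam l).
have [m0 _] := andP (phi_inv r l l1 ln).
have muT : mu <= T r by apply: (@sum_ge_term (fun j => phi r (lam j))).
have [T0|Tp] := eqVneq (T r) 0.
  rewrite T0 invr0 mul0r subr0; apply: le_trans muT _; rewrite T0.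
  by apply: eta_nat_ge0.
have Tpos : 0 < T r by rewrite lt_neqAle eq_sym Tp (le_trans m0 muT).
have step1 : mu - (T r)^-1 * mu ^+ 2 <= a - (T r)^-1 * a ^+ 2.
  have [lj|lj] := eqVneq l j; first by rewrite /mu lj.
  have two : mu + a <= T r by apply: (@sum_ge_two (fun j => phi r (lam j))).
  have ma : mu <= a by exact: hj.
  rewrite -subr_ge0.
  have -> : a - (T r)^-1 * a ^+ 2 - (mu - (T r)^-1 * mu ^+ 2) =
     (a - mu) * (T r - a - mu) / T r.
    by field; rewrite gt_eqF.
  apply: divr_ge0; last exact: ltW.
  by apply: mulr_ge0; rewrite subr_ge0 // lerBrDr.
have step2 : T r <= q%:R * a + S.
  rewrite /T (@big_cat_nat _ _ _ q.+1) //=.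
  apply: lerD.
    have -> : q%:R * a = \sum_(1 <= i < q.+1) a by rewrite sumr_const_nat subn1 /= mulr_natl.
    rewrite [X in X <= _]big_seq [X in _ <= X]big_seq; apply: ler_sum => i.
    rewrite mem_index_iota ltnS => /andP[i1 iq]; apply: hj => //; exact: leq_trans qn.
  rewrite /S [X in X <= _]big_seq [X in _ <= X]big_seq; apply: ler_sum => i.
  rewrite mem_index_iota ltnS => /andP[i1 iq].
  have /andP[] // := phi_inv r i (leq_trans (ltn0Sn _) i1) iq.
have step3 : a - (T r)^-1 * a ^+ 2 <= @gf R q S a.
  rewrite /gf lerD2l lerN2 mulrC; apply: ler_wpM2r; first exact: sqr_ge0.
  rewrite lef_pV2 ?posrE //; exact: lt_le_trans step2.
apply: le_trans step1 _; apply: le_trans step3 _.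
apply: le_trans (@gf_mono R q S _ _ _ _ a0 aeta) _ => //.
apply: eta_step => //.
Qed.

End Scalar.
Section Mat.
Variables (R : realType) (n' : nat).
Local Notation n := n'.+1.

Lemma sym_pow (S : 'M[R]_n) : S^T = S -> forall k, (S ^+ k)^T = S ^+ k.
Proof.
move=> Ss; elim=> [|k IH]; first by rewrite expr0 trmx1.
by rewrite [in LHS]exprS -mulmxE trmx_mul IH Ss mulmxE -exprSr exprS.
Qed.

Lemma sym_sq0 (S : 'M[R]_n) : S^T = S -> S * S = 0 -> S = 0.
Proof.
move=> Ss SS0; apply/matrixP => i j; rewrite mxE.
have h : \sum_k S i k ^+ 2 = 0.
  have e : (S * S) i i = 0 by rewrite SS0 mxE.
  rewrite -[in RHS]e -mulmxE mxE; apply: eq_bigr => k _; rewrite expr2; congr (_ * _).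
  by rewrite -{1}Ss mxE.
have := psumr_eq0P (P := predT) (F := fun k => S i k ^+ 2) _ h.
by move=> /(_ (fun k _ => sqr_ge0 _) j isT) /eqP; rewrite sqrf_eq0 => /eqP.
Qed.

Lemma sym_nil (S : 'M[R]_n) : S^T = S -> forall m, S ^+ m.+1 = 0 -> S = 0.
Proof.
move=> Ss; elim=> [|m IH] h; first by rewrite expr1 in h.
apply: IH; apply: sym_sq0; first exact: sym_pow.
rewrite -exprD; have -> : (m.+1 + m.+1 = m.+2 + m)%N by rewrite !addSn addnS.
by rewrite exprD h mul0r.
Qed.

Lemma horner_sym (H : 'M[R]_n) p : H^T = H -> (horner_mx H p)^T = horner_mx H p.
Proof.
move=> Hs; elim/poly_ind: p => [|p c IH]; first by rewrite rmorph0 trmx0.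
rewrite rmorphD rmorphM /= horner_mx_X horner_mx_C linearD /= tr_scalar_mx.
rewrite -mulmxE trmx_mul IH Hs; congr (_ + _).
by have := comm_mx_horner p (erefl (H *m H)); rewrite /comm_mx.
Qed.

Lemma char_poly_conj (P A : 'M[R]_n) : P \in unitmx ->
  char_poly (invmx P *m A *m P) = char_poly A.
Proof.
move=> Pu; rewrite /char_poly /char_poly_mx.
have -> : 'X%:M - map_mx polyC (invmx P *m A *m P) =
    map_mx polyC (invmx P) *m ('X%:M - map_mx polyC A) *m map_mx polyC P.
  rewrite !map_mxM mulmxBr mulmxBl ?mulmxA; congr (_ - _).
  rewrite mul_mx_scalar -scalemxAl -map_mxM mulVmx // map_mx1.
  by rewrite scalemx1.
rewrite !det_mulmx !det_map_mx /= mulrAC -rmorphM -det_mulmx mulVmx //.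
by rewrite det1 rmorph1 mul1r.
Qed.

Lemma Phi_conj (P : 'M[R]_n) (e : 'rV[R]_n) : P \in unitmx ->
  Phi (invmx P *m diag_mx e *m P) =
  invmx P *m diag_mx (\row_i (e 0 i - (\sum_j e 0 j)^-1 * e 0 i ^+ 2)) *m P.
Proof.
move=> Pu; rewrite /Phi.
have -> : \tr (invmx P *m diag_mx e *m P) = \sum_j e 0 j.
  by rewrite mxtrace_mulC mulmxA mulmxV // mul1mx mxtrace_diag.
have -> : (invmx P *m diag_mx e *m P) *m (invmx P *m diag_mx e *m P) =
    invmx P *m (diag_mx e *m diag_mx e) *m P.
  by rewrite !mulmxA mulmxK.
rewrite scalemxAl scalemxAr -mulmxBl -mulmxBr; congr (_ *m _ *m _).
rewrite mul_diag_mx; apply/matrixP => i j; rewrite !mxE.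
case: (eqVneq i j) => [->|ij]; last by rewrite /= !(mulr0n, mulr0, subr0, oppr0, addr0).
by rewrite /= !mulr1n expr2.
Qed.

Lemma eig_conj_diag (P : 'M[R]_n) (e : 'rV[R]_n) mu : P \in unitmx ->
  eigenvalue (invmx P *m diag_mx e *m P) mu -> exists i, mu = e 0 i.
Proof.
move=> Pu /eigenvalueP [v vM vn0].
set w := v *m invmx P.
have wD : w *m diag_mx e = mu *: w.
  have := congr1 (mulmx^~ (invmx P)) vM.
  by rewrite /= !mulmxA mulmxK // -scalemxAl.
have wn0 : w != 0.
  apply: contra vn0 => /eqP w0; by rewrite -(mulmxKV Pu v) -/w w0 mul0mx.
have [i wi] : exists i, w 0 i != 0.
  case: (pickP (fun i => w 0 i != 0)) => [i wi|h]; first by exists i.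
  have w0 : w = 0 by apply/rowP => i; rewrite [RHS]mxE; move: (h i) => /negbFE/eqP.
  by move: wn0; rewrite w0 eqxx.
clearbody w; exists i; have := congr1 (fun M : 'rV[R]_n => M 0 i) wD.
rewrite /= mul_mx_diag !mxE => h.
by apply: (mulfI wi); rewrite [LHS]mulrC -h.
Qed.

End Mat.

Lemma dvd_prod_undup (F : fieldType) (s t : seq F) : {subset s <= t} ->
  \prod_(x <- s) ('X - x%:P) %| (\prod_(x <- t) ('X - x%:P)) ^+ size s.
Proof.
elim: s => [|x s IH] st; first by rewrite big_nil dvd1p.
rewrite big_cons exprS; apply: dvdp_mul.
  by rewrite dvdp_XsubCl root_prod_XsubC; apply: st; rewrite mem_head.
by apply: IH => y ys; apply: st; rewrite in_cons ys orbT.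
Qed.

Theorem lemmaD2 (R : realType) (n : nat) (H : 'M[R]_n) (lam : nat -> R)
  (q : nat) (eta : R -> R) :
  H^T = H ->
  (forall v : 'rV[R]_n, 0 <= (v *m H *m v^T) 0 0) ->
  char_poly H = \prod_(1 <= l < n.+1) ('X - (lam l)%:P) ->
  (forall l m : nat, (1 <= l)%N -> (l <= m)%N -> (m <= n)%N -> lam m <= lam l) ->
  (1 <= q)%N -> (q <= n)%N ->
  eta 0 = lam 1%N ->
  {within `[0%R, +oo[, continuous eta} ->
  (forall t : R, 0 < t ->
     is_derive t 1 eta
       (- (eta t ^+ 2) / (q%:R * eta t + \sum_(q.+1 <= l < n.+1) lam l))) ->
  (forall s t : R, 0 <= s -> s <= t -> eta t <= eta s) ->
  forall (r : nat) (mu : R), eigenvalue (iter r (@Phi R n) H) mu -> mu <= eta r%:R.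
Proof.
move=> Hsym Hpsd Hchar Hmono q1 qn eta0 etac etad etam r mu.
destruct n as [|n']; first by move: (leq_trans q1 qn).
set lams := [seq lam l | l <- index_iota 1 n'.+2].
have Hchar' : char_poly H = \prod_(x <- lams) ('X - x%:P) by rewrite Hchar big_map.
have lam0 : forall l, (1 <= l)%N -> (l <= n'.+1)%N -> 0 <= lam l.
  move=> l l1 ln.
  have : eigenvalue H (lam l).
    rewrite eigenvalue_root_char Hchar' root_prod_XsubC; apply: map_f.
    by rewrite mem_index_iota l1 ltnS.
  move=> /eigenvalueP [v vH vn0].
  have := Hpsd v; rewrite vH -scalemxAl mxE.
  have hk : forall k, 0 <= v 0 k * v^T k 0 by move=> k; rewrite mxE -expr2 sqr_ge0.
  have sp : 0 < (v *m v^T) 0 0.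
    rewrite mxE lt_neqAle sumr_ge0 ?andbT //.
    apply/negP => /eqP /esym h0; move/negP: vn0; apply; apply/eqP/rowP => k.
    move: (psumr_eq0P (fun k _ => hk k) h0 (i:=k) isT).
    by rewrite [v^T k 0]mxE -expr2 => /eqP; rewrite sqrf_eq0 => /eqP ->; rewrite mxE.
  by rewrite pmulr_lge0.
set Q := \prod_(x <- undup lams) ('X - x%:P).
have sl : size lams = n'.+1 by rewrite size_map size_iota subn1.
have dQ : char_poly H %| Q ^+ n'.+1.
  by rewrite Hchar' -sl; apply: dvd_prod_undup => x; rewrite mem_undup.
have hQ : horner_mx H Q = 0.
  apply: (@sym_nil _ _ _ (@horner_sym _ _ H Q Hsym) n').
  rewrite -rmorphXn /=; have [c ->] := dvdpP _ _ dQ.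
  by rewrite rmorphM /= Cayley_Hamilton mulr0.
have [P Pu sPH] : exists2 P, P \in unitmx & similar_diag P H.
  apply/diagonalizableP; exists (undup lams); first exact: undup_uniq.
  exact: mxminpoly_min.
have /similar_diagPex [D sD] := sPH.
move/(similarLR Pu): sD; rewrite conjVmx // => HD.
have pe : perm_eq [seq D 0 i | i <- enum 'I_n'.+1] lams.
  apply: prod_XsubC_eq; rewrite -Hchar' HD char_poly_conj //.
  rewrite char_poly_trig ?diag_mx_is_trig // big_map big_enum /=.
  by apply: eq_bigr => i _; rewrite mxE eqxx mulr1n.
have sums : forall F : R -> R,
    \sum_(j < n'.+1) F (D 0 j) = \sum_(1 <= l < n'.+2) F (lam l).
  move=> F.
  have -> : \sum_(j < n'.+1) F (D 0 j) =
      \sum_(x <- [seq D 0 i | i <- enum 'I_n'.+1]) F x by rewrite big_map big_enum.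
  by rewrite (perm_big _ pe) big_map.
have iterE : forall k, iter k (@Phi R n'.+1) H =
    invmx P *m diag_mx (\row_i phi R n'.+1 lam k (D 0 i)) *m P.
  elim=> [|k IH].
    by rewrite /= {1}HD; congr (_ *m diag_mx _ *m _); apply/rowP => i; rewrite mxE.
  rewrite iterS IH Phi_conj //; congr (_ *m diag_mx _ *m _); apply/rowP => i.
  rewrite !mxE /=.
  have -> : \sum_j (\row_i0 phi R n'.+1 lam k (D 0 i0)) 0 j =
      \sum_j phi R n'.+1 lam k (D 0 j) by apply: eq_bigr => j _; rewrite mxE.
  by rewrite sums.
move=> eig; rewrite iterE in eig.
have [i ->] := @eig_conj_diag _ _ P _ mu Pu eig; rewrite mxE.
have : D 0 i \in lams by rewrite -(perm_mem pe); apply: map_f; rewrite mem_enum.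
move=> /mapP [l]; rewrite mem_index_iota => /andP [l1 ln] ->.
apply: (@phi_le R n'.+1 q lam eta lam0 Hmono q1 qn eta0 etac etad etam r l l1).
by rewrite -ltnS.
Qed.
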